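(* Let $G$ be a finite abelian group and $\mathcal{H}$ a finite dimensional complex Hilbert space with $\dim\mathcal{H}\geq 2$. In each of the following two cases there exists no $U$-covariant pure-state informationally complete observable (based on $G/H$ for any proper subgroup $H$ of $G$): (a) $U$ is a unitary representation of $G$ on $\mathcal{H}$; (b) $G$ is cyclic and $U$ is a projective unitary representation of $G$ on $\mathcal{H}$.
   Context: $\mathbb{T}$ is the group of unimodular complex numbers. A projective unitary representation of $G$ on $\mathcal{H}$ is a map $g\mapsto U(g)$ into the unitaries with $U(e)=I$ and $U(gh)=\omega(g,h)U(g)U(h)$, $\omega(g,h)\in\mathbb{T}$. An observable with finite outcome set $\Omega$ is a map $\mathsf{M}$ from $\Omega$ to positive operators on $\mathcal{H}$ with $\sum_{x\in\Omega}\mathsf{M}(x)=I$. It is pure-state informationally complete (PIC) if for any two different pure states (rank-one projections) $\varrho_1\neq\varrho_2$ there is $x\in\Omega$ with $\mathrm{tr}(\varrho_1\mathsf{M}(x))\neq\mathrm{tr}(\varrho_2\mathsf{M}(x))$. For a subgroup $H$ of $G$, $G$ acts on the set of left cosets $G/H$ by $g'\cdot gH=g'gH$; an observable $\mathsf{M}$ on $\Omega=G/H$ is $U$-covariant if $U(g)\mathsf{M}(x)U(g)^*=\mathsf{M}(g\cdot x)$ for all $g\in G$, $x\in G/H$. *)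

(* Defs.v *)
From HB Require Import structures.
From mathcomp Require Import all_boot all_order all_algebra all_fingroup.
From mathcomp Require Import complex reals.
Set Implicit Arguments. Unset Strict Implicit. Unset Printing Implicit Defensive.
Import Order.TTheory GRing.Theory Num.Theory.
Local Open Scope ring_scope.

Section Defs.
Variable R : realType.
Local Notation C := (R[i]).

Definition adjmx n m (A : 'M[C]_(m, n)) : 'M[C]_(n, m) := (map_mx Num.conj A)^T.

Definition unitarymx n (A : 'M[C]_n) : Prop := A *m adjmx A = 1%:M.

Definition posop n (A : 'M[C]_n) : Prop :=
  forall v : 'cV[C]_n, 0 <= (adjmx v *m A *m v) 0 0.

Definition pure_state n (P : 'M[C]_n) : Prop :=
  adjmx P = P /\ P *m P = P /\ \rank P = 1%N.

Definition proj_unitary_rep (gT : finGroupType) n (U : gT -> 'M[C]_n) : Prop :=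
  (forall g, unitarymx (U g)) /\ U 1%g = 1%:M /\
  forall g h, exists w : C, `|w| = 1 /\ U (g * h)%g = w *: (U g *m U h).

Definition unitary_rep (gT : finGroupType) n (U : gT -> 'M[C]_n) : Prop :=
  (forall g, unitarymx (U g)) /\ U 1%g = 1%:M /\
  forall g h, U (g * h)%g = U g *m U h.

(* Observable with outcome set G/H = lcosets H [set: gT]; M is indexed by
   subsets of gT but only its values on left cosets matter. *)
Definition coset_observable (gT : finGroupType) (H : {group gT}) n
    (M : {set gT} -> 'M[C]_n) : Prop :=
  (forall x, x \in lcosets H [set: gT] -> posop (M x)) /\
  \sum_(x in lcosets H [set: gT]) M x = 1%:M.

Definition PIC_coset (gT : finGroupType) (H : {group gT}) n
    (M : {set gT} -> 'M[C]_n) : Prop :=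
  forall r1 r2 : 'M[C]_n, pure_state r1 -> pure_state r2 -> r1 <> r2 ->
    exists2 x, x \in lcosets H [set: gT] & \tr (r1 *m M x) <> \tr (r2 *m M x).

(* U(g) M(x) U(g)^* = M(g . x), with g . (aH) = (g a)H = g *: (aH) *)
Definition covariant_coset (gT : finGroupType) (H : {group gT}) n
    (U : gT -> 'M[C]_n) (M : {set gT} -> 'M[C]_n) : Prop :=
  forall g x, x \in lcosets H [set: gT] ->
    U g *m M x *m adjmx (U g) = M (g *: x)%g.

End Defs.

(* Main.v *)
Set Warnings "-notation-overridden,-ambiguous-paths,-notation-incompatible-prefix".
Require Import Defs.
From HB Require Import structures.
From mathcomp Require Import all_boot all_order all_algebra all_fingroup all_solvable all_field.
From mathcomp Require Import complex reals.
Import Order.TTheory GRing.Theory Num.Theory.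
Local Open Scope ring_scope.
Set Implicit Arguments. Unset Strict Implicit. Unset Printing Implicit Defensive.
Section S.
Variable R : realType.
Local Notation C := (R[i]).

Lemma adjmxM m n p (A : 'M[C]_(m, n)) (B : 'M[C]_(n, p)) :
  adjmx (A *m B) = adjmx B *m adjmx A.
Proof. by rewrite /adjmx map_mxM trmx_mul. Qed.

Lemma adjmxZ m n a (A : 'M[C]_(m, n)) : adjmx (a *: A) = a^* *: adjmx A.
Proof. by rewrite /adjmx map_mxZ; apply/matrixP => i j; rewrite !mxE. Qed.

Lemma adjmxK m n (A : 'M[C]_(m, n)) : adjmx (adjmx A) = A.
Proof. by apply/matrixP => i j; rewrite !mxE conjCK. Qed.

Lemma adjmx_mxE m n (A : 'M[C]_(m, n)) i j : adjmx A i j = (A j i)^*.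
Proof. by rewrite !mxE. Qed.

Lemma diag_pow n (f : 'M[C]_n.+1) N c : (0 < N)%N -> c != 0 -> f ^+ N = c%:M ->
  diagonalizable f.
Proof.
move=> N0 c0 fN.
have sepq : separable_poly ('X^N - c%:P : {poly C}).
  rewrite unlock; apply: Pdiv.ClosedField.root_coprimep => x.
  rewrite rootE !hornerE derivB derivXn derivC subr0 hornerMn hornerXn subr_eq0.
  move=> /eqP xN; apply/negP => /eqP.
  move/eqP; rewrite mulrn_eq0 /=; case/orP.
    by move/eqP=> N00; move: N0; rewrite N00.
  rewrite expf_eq0 => /andP[_ /eqP x0].
  by move: xN c0; rewrite x0 expr0n -(prednK N0) /= => <-; rewrite eqxx.
have dv : mxminpoly f %| 'X^N - c%:P.
  apply: mxminpoly_min; rewrite rmorphB /= rmorphXn /= horner_mx_X horner_mx_C fN.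
  by rewrite subrr.
have sepm := dvdp_separable dv sepq.
have [rs Hrs] := closed_field_poly_normal (mxminpoly f).
move: Hrs; rewrite (monicP (mxminpoly_monic f)) scale1r => Hrs.
apply/diagonalizableP; exists rs.
  by rewrite -separable_prod_XsubC -Hrs.
by rewrite -Hrs.
Qed.

Definition qn n (r : 'rV[C]_n) := (r *m adjmx r) 0 0.

Lemma qn_neq0 n (r : 'rV[C]_n) : r != 0 -> qn r != 0.
Proof.
apply: contraNneq => q0; apply/eqP/rowP => j; rewrite mxE.
move: q0; rewrite /qn mxE => /eqP; rewrite psumr_eq0 => [/allP H|i _]; last first.
  by rewrite adjmx_mxE mul_conjC_ge0.
have := H j; rewrite mem_index_enum /= adjmx_mxE mul_conjC_eq0 => /(_ isT).
by move/eqP.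
Qed.

Lemma qn_conj n (r : 'rV[C]_n) : (qn r)^* = qn r.
Proof.
by rewrite /qn -adjmx_mxE adjmxM adjmxK.
Qed.

Lemma mx11E (A : 'M[C]_1) : A = (A 0 0)%:M.
Proof. exact: mx11_scalar. Qed.


Lemma rrE n (r : 'rV[C]_n) : r *m adjmx r = (qn r)%:M.
Proof. exact: mx11E. Qed.

Definition rho n (r : 'rV[C]_n) : 'M[C]_n := (qn r)^-1 *: (adjmx r *m r).

Lemma rho_pure n (r : 'rV[C]_n) : r != 0 -> pure_state (rho r).
Proof.
move=> r0; have q0 := qn_neq0 r0.
split; [|split].
- rewrite /rho adjmxZ adjmxM adjmxK fmorphV; congr (_^-1 *: _); exact: qn_conj.
- rewrite /rho -scalemxAl -scalemxAr scalerA mulmxA -(mulmxA (adjmx r)) rrE.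
  rewrite mul_mx_scalar -scalemxAl scalerA -mulrA mulVf // mulr1.
  done.
- apply/eqP; rewrite eqn_leq; apply/andP; split.
    apply: leq_trans (mxrank_scale _ _) _.
    apply: leq_trans (mxrankM_maxr _ _) _.
    exact: rank_leq_row.
  rewrite lt0n mxrank_eq0; apply/eqP => h.
  have : rho r *m adjmx r = 0 by rewrite h mul0mx.
  rewrite /rho -scalemxAl -mulmxA rrE mul_mx_scalar scalerA mulVf // scale1r.
  move/eqP; rewrite -(adjmxK r) in r0.
  by apply/negP; apply: contra r0 => /eqP ->; apply/eqP/matrixP => i j; rewrite !mxE conjC0.
Qed.

Lemma tr_rho n (r : 'rV[C]_n) A : \tr (rho r *m A) = (qn r)^-1 * (r *m A *m adjmx r) 0 0.
Proof.
rewrite /rho -scalemxAl mxtraceZ -mulmxA mxtrace_mulC .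
by rewrite /mxtrace big_ord1.
Qed.

Lemma rho_inj n (r1 r2 : 'rV[C]_n) : r1 != 0 -> r2 != 0 -> rho r1 = rho r2 ->
  exists s, r2 = s *: r1.
Proof.
move=> r10 r20 e.
have : r2 *m rho r2 = r2.
  rewrite /rho -scalemxAr mulmxA rrE mul_scalar_mx scalerA mulVf ?qn_neq0 //.
  by rewrite scale1r.
rewrite -e /rho -scalemxAr mulmxA (mx11E (r2 *m adjmx r1)) mul_scalar_mx scalerA.
by move=> <-; eexists.
Qed.

Lemma unit_mu n (V : 'M[C]_n) (r : 'rV[C]_n) mu : Defs.unitarymx V -> r != 0 ->
  r *m V = mu *: r -> mu * mu^* = 1.
Proof.
move=> uV r0 e.
have h : (r *m V) *m adjmx (r *m V) = r *m adjmx r.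
  by rewrite adjmxM mulmxA -(mulmxA r) uV mulmx1.
move: h; rewrite e adjmxZ -scalemxAl -scalemxAr scalerA => /(congr1 (fun A : 'M[C]_1 => A 0 0)).
rewrite mxE -/(qn r) => /eqP; rewrite -subr_eq0 -{2}(mul1r (qn r)) -mulrBl mulf_eq0.
by rewrite (negPf (qn_neq0 r0)) orbF subr_eq0 => /eqP.
Qed.

Lemma data (gT : finGroupType) (H : {group gT}) n (U : gT -> 'M[C]_n) M r :
  (forall g, Defs.unitarymx (U g)) -> r != 0 ->
  (forall g, exists mu, r *m U g = mu *: r) ->
  coset_observable H M -> covariant_coset H U M ->
  forall x, x \in lcosets H [set: gT] ->
  \tr (rho r *m M x) = (#|lcosets H [set: gT]|%:R)^-1.
Proof.
move=> uU r0 eig [_ sumM] cov.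
pose t x := (r *m M x *m adjmx r) 0 0.
have HL : (H : {set gT}) \in lcosets H [set: gT].
  by apply/lcosetsP; exists 1%g; rewrite ?inE ?lcoset1.
have tc : forall x, x \in lcosets H [set: gT] -> t x = t H.
  move=> x /lcosetsP[g _ ->]; rewrite /t -cov //.
  have [mu e] := eig g.
  rewrite !mulmxA e -scalemxAl -mulmxA -adjmxM e adjmxZ -scalemxAr.
  by rewrite -scalemxAl scalerA mulrC (unit_mu (uU g) r0 e) scale1r.
have hs : \sum_(x in lcosets H [set: gT]) t x = qn r.
  rewrite /t -summxE -mulmx_suml -mulmx_sumr sumM mulmx1 //.
have hs2 : t H *+ #|lcosets H [set: gT]| = qn r.
  by rewrite -hs -sumr_const; apply: eq_bigr => x xL; rewrite tc.
have L0 : (#|lcosets H [set: gT]|%:R : C) != 0.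
  by rewrite pnatr_eq0 -lt0n card_gt0; apply/set0Pn; exists (H : {set gT}).
have tH0 : t H != 0.
  by apply: contraNneq (qn_neq0 r0) => h; rewrite -hs2 h mul0rn.
move=> x xL; rewrite tr_rho -/(t x) tc // -hs2 -mulr_natr invfM mulrC mulrA.
by rewrite mulfV // mul1r.
Qed.

Lemma core (gT : finGroupType) (H : {group gT}) n (U : gT -> 'M[C]_n) M (r1 r2 : 'rV[C]_n) :
  (forall g, Defs.unitarymx (U g)) -> r1 != 0 -> r2 != 0 ->
  (forall s, r2 != s *: r1) ->
  (forall g, exists mu, r1 *m U g = mu *: r1) ->
  (forall g, exists mu, r2 *m U g = mu *: r2) ->
  coset_observable H M -> covariant_coset H U M -> ~ PIC_coset H M.
Proof.
move=> uU r10 r20 ind e1 e2 obs cov pic.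
have neq : rho r1 <> rho r2.
  by move=> /(rho_inj r10 r20) [s es]; move: (ind s); rewrite es eqxx.
have [x xL []] := pic _ _ (rho_pure r10) (rho_pure r20) neq.
by rewrite (data uU r10 e1 obs cov xL) (data uU r20 e2 obs cov xL).
Qed.

Lemma row_eig n m (P : 'M[C]_(m, n)) (V : 'M[C]_n) d (i : 'I_m) :
  P *m V = diag_mx d *m P -> row i P *m V = d 0 i *: row i P.
Proof.
move=> e; rewrite -row_mul e; apply/rowP => j; rewrite !mxE.
rewrite (bigD1 i) //= big1 ?addr0; first by rewrite !mxE eqxx mulr1n.
by move=> k ki; rewrite !mxE eq_sym (negPf ki) mulr0n mul0r.
Qed.

Lemma row_unit_neq0 n (P : 'M[C]_n) i : P \in unitmx -> row i P != 0.
Proof.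
move=> Pu; rewrite rowE; apply/eqP => /(congr1 (fun A => A *m invmx P)).
rewrite mul0mx -mulmxA mulmxV // mulmx1 => /matrixP /(_ 0 i); rewrite !mxE !eqxx /=.
by move/eqP; rewrite oner_eq0.
Qed.

Lemma row_unit_indep n (P : 'M[C]_n.+2) s : P \in unitmx ->
  row 1 P != s *: row 0 P.
Proof.
move=> Pu; apply/eqP => h.
have : ((delta_mx 0 1 - s *: delta_mx 0 0) : 'rV[C]_n.+2) *m P = 0.
  by rewrite mulmxBl -scalemxAl -!rowE h subrr.
move=> /(congr1 (fun A => A *m invmx P)); rewrite -mulmxA mulmxV // mulmx1 mul0mx.
move=> /matrixP /(_ 0 1); rewrite !mxE !eqxx /= mulr0 subr0.
by move/eqP; rewrite oner_eq0.
Qed.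

Lemma codiag (gT : finGroupType) n (U : gT -> 'M[C]_n.+1) :
  (forall g h, U g *m U h = U h *m U g) -> (forall g, diagonalizable (U g)) ->
  exists2 P, P \in unitmx & forall g, exists d, P *m U g = diag_mx d *m P.
Proof.
move=> cU dU.
have [] := (codiagonalizableP [seq U g | g <- enum gT]).1.
  split.
    by move=> f h /mapP[g _ ->] /mapP[k _ ->]; rewrite /comm_mx cU.
  by move=> f /mapP[g _ ->].
move=> P Pu /allP Hall; exists P => // g.
have /Hall /= /similar_diagPex [d hd] : U g \in [seq U g | g <- enum gT].
  by apply/mapP; exists g; rewrite ?mem_enum.
by exists d; apply/(similarP Pu).
Qed.

Lemma proj_pow (gT : finGroupType) n (U : gT -> 'M[C]_n.+1) :
  proj_unitary_rep U -> forall g k, exists c : C, `|c| = 1 /\ U (g ^+ k)%g = c *: (U g ^+ k).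
Proof.
move=> [uU [U1 UM]] g; elim=> [|k [c [c1 e]]].
  by exists 1; rewrite normr1 expg0 U1 scale1r expr0.
have [w [w1 ew]] := UM (g ^+ k)%g g.
exists (w * c); split; first by rewrite normrM w1 c1 mulr1.
by rewrite expgSr ew e exprSr -scalemxAl scalerA mulmxE.
Qed.

Lemma proj_diag (gT : finGroupType) n (U : gT -> 'M[C]_n.+1) :
  proj_unitary_rep U -> forall g, diagonalizable (U g).
Proof.
move=> pU g; have [c [c1 e]] := proj_pow pU g #[g]%g.
have c0 : c != 0 by rewrite -normr_eq0 c1 oner_eq0.
apply: (diag_pow (N:=#[g]%g) (c:=c^-1)) => //; first by rewrite invr_eq0.
move: e; rewrite expg_order (proj1 (proj2 pU)) => /(congr1 (fun A => c^-1 *: A)).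
by rewrite scalerA mulVf // scale1r => <-; rewrite scalemx1.
Qed.

Lemma finish (gT : finGroupType) (H : {group gT}) n (U : gT -> 'M[C]_n.+2) :
  proj_unitary_rep U -> (forall g h, U g *m U h = U h *m U g) ->
  ~ exists M : {set gT} -> 'M[C]_n.+2,
         [/\ coset_observable H M, covariant_coset H U M & PIC_coset H M].
Proof.
move=> pU cU [M [obs cov pic]].
have [P Pu hP] := codiag cU (proj_diag pU).
have eig : forall i g, exists mu, row i P *m U g = mu *: row i P.
  by move=> i g; have [d e] := hP g; exists (d 0 i); apply: row_eig.
apply: (core (r1 := row 0 P) (r2 := row 1 P) (proj1 pU) _ _ _ (eig 0) (eig 1) obs cov pic).
- exact: row_unit_neq0.
- exact: row_unit_neq0.
- by move=> s; apply: row_unit_indep.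
Qed.

End S.

Unset Implicit Arguments.
Theorem proposition5 (R : realType) (gT : finGroupType) (n : nat) :
  abelian [set: gT] -> (2 <= n)%N ->
  (forall (U : gT -> 'M[R[i]]_n), unitary_rep U ->
     forall H : {group gT}, H \proper [set: gT] ->
     ~ exists M : {set gT} -> 'M[R[i]]_n,
         [/\ coset_observable H M, covariant_coset H U M & PIC_coset H M])
  /\
  (cyclic [set: gT] ->
   forall (U : gT -> 'M[R[i]]_n), proj_unitary_rep U ->
     forall H : {group gT}, H \proper [set: gT] ->
     ~ exists M : {set gT} -> 'M[R[i]]_n,
         [/\ coset_observable H M, covariant_coset H U M & PIC_coset H M]).
Proof.
move=> ab; case: n => [|[|n]] // _; split.
  move=> U [uU [U1 UM]] H _; apply: finish.
    by split=> //; split=> // g h; exists 1; rewrite normr1 scale1r UM.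
  move=> g h; rewrite -!UM; congr (U _).
  by apply: (centsP ab); rewrite inE.
move=> /cyclicP [a ea] U pU H _; apply: (finish pU).
have hp : forall g, exists k c, `|c| = 1 /\ U g = c *: (U a ^+ k).
  move=> g; have : g \in <[a]>%g by rewrite -ea inE.
  case/cycleP => k ->; have [c [c1 e]] := proj_pow pU a k.
  by exists k, c.
move=> g h; have [k [c [_ ->]]] := hp g; have [l [c' [_ ->]]] := hp h.
rewrite !mulmxE -!scalerAl -!scalerAr !scalerA mulrC -!exprD addnC.
done.
Qed.
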